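(* Let $(S,\ast)$ and $(T,\ast')$ be adequate commutative partial semigroups, let $h:S\to T$ be a surjective partial semigroup homomorphism, and let $\tilde h:\beta S\to\beta T$ be the continuous extension of $h$. Suppose $\tilde h$ maps $\delta S$ onto $\delta T$. Then (a) $\tilde h(K(\delta S))=K(\delta T)$; (b) if $A$ is a central set in $S$, then $h(A)$ is a central set in $T$; (c) if $A$ is a central set in $T$, then $h^{-1}(A)$ is a central set in $S$.
   Context: A partial semigroup is a pair $(S,\ast)$ where $\ast$ is an operation defined on a subset of $S\times S$ such that $(x\ast y)\ast z=x\ast(y\ast z)$ in the sense that if either side is defined, so is the other and they are equal; commutative means $x\ast y=y\ast x$ whenever defined. $\phi_S(s)=\{t: s\ast t\text{ defined}\}$, $\sigma_S(H)=\bigcap_{s\in H}\phi_S(s)$ for finite nonempty $H$; $S$ is adequate if all $\sigma_S(H)\ne\emptyset$. A map $h:S\to T$ is a partial semigroup homomorphism if whenever $y\in\phi_S(x)$, $h(y)\in\phi_T(h(x))$ and $h(x\ast y)=h(x)\ast' h(y)$. $\beta S$ is the Stone–Čech compactification of discrete $S$ (ultrafilters on $S$); $\tilde h(p)=\{B\subseteq T: h^{-1}(B)\in p\}$. $\delta S=\bigcap_{x\in S}\overline{\phi_S(x)}$, where $\overline{A}=\{p\in\beta S: A\in p\}$, with operation $p\ast q=\{A\subseteq S:\{s: s^{-1}A\in q\}\in p\}$, $s^{-1}A=\{t\in\phi_S(s): s\ast t\in A\}$; $\delta S$ is a compact right topological semigroup with smallest two-sided ideal $K(\delta S)$ (similarly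 for $T$). $A\subseteq S$ is central if there is an idempotent $p\in K(\delta S)\cap\overline{A}$. *)

(* Defs.v *)
From Stdlib Require Import List.
Set Implicit Arguments.

Section PSG.
Variable S : Type.
Variable op : S -> S -> option S.

Definition ps_assoc : Prop :=
  forall x y z,
    match op x y with Some u => op u z | None => None end =
    match op y z with Some v => op x v | None => None end.

Definition ps_comm : Prop := forall x y, op x y = op y x.

Definition phi (s : S) : S -> Prop := fun t => op s t <> None.

Definition adequate : Prop :=
  forall H : list S, H <> nil -> exists t, forall s, In s H -> phi s t.

Definition ultrafilter (p : (S -> Prop) -> Prop) : Prop :=
  p (fun _ => True) /\ ~ p (fun _ => False) /\
  (forall A B : S -> Prop, p A -> (forall x, A x -> B x) -> p B) /\
  (forall A B : S -> Prop, p A -> p B -> p (fun x => A x /\ B x)) /\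
  (forall A : S -> Prop, p A \/ p (fun x => ~ A x)).

(* delta S = intersection over x of closure of phi_S(x) *)
Definition deltaS (p : (S -> Prop) -> Prop) : Prop :=
  ultrafilter p /\ forall x, p (phi x).

Definition sinv (s : S) (A : S -> Prop) : S -> Prop :=
  fun t => exists u, op s t = Some u /\ A u.

Definition uf_mul (p q : (S -> Prop) -> Prop) : (S -> Prop) -> Prop :=
  fun A => p (fun s => q (sinv s A)).

Definition is_ideal (I : ((S -> Prop) -> Prop) -> Prop) : Prop :=
  (exists p, I p) /\ (forall p, I p -> deltaS p) /\
  (forall p q, deltaS p -> I q -> I (uf_mul p q) /\ I (uf_mul q p)).

Definition Kdelta (p : (S -> Prop) -> Prop) : Prop :=
  deltaS p /\ forall I, is_ideal I -> I p.

Definition central (A : S -> Prop) : Prop :=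
  exists p, Kdelta p /\ uf_mul p p = p /\ p A.

End PSG.

Definition ps_hom (S T : Type) (opS : S -> S -> option S) (opT : T -> T -> option T)
  (h : S -> T) : Prop :=
  forall x y z, opS x y = Some z -> opT (h x) (h y) = Some (h z).

(* continuous extension of h to beta S *)
Definition hext (S T : Type) (h : S -> T) (p : (S -> Prop) -> Prop) : (T -> Prop) -> Prop :=
  fun B => p (fun s => B (h s)).

Definition img (S T : Type) (h : S -> T) (A : S -> Prop) : T -> Prop :=
  fun t => exists s, A s /\ h s = t.

Definition preim (S T : Type) (h : S -> T) (B : T -> Prop) : S -> Prop :=
  fun s => B (h s).

(* Main.v *)
Require Import Defs.
From Stdlib Require Import Classical FunctionalExtensionality PropExtensionality.
From mathcomp Require classical_sets boolp.
Set Implicit Arguments.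
Set Bullet Behavior "Strict Subproofs".

Lemma zorn_gen (X : Type) (P : X -> Prop) (R : X -> X -> Prop) (x0 : X) :
  (forall x, R x x) -> (forall x y z, R x y -> R y z -> R x z) -> P x0 ->
  (forall C : X -> Prop, (forall c, C c -> P c) ->
     (forall a b, C a -> C b -> R a b \/ R b a) -> (exists c, C c) ->
     exists u, P u /\ forall c, C c -> R c u) ->
  exists m, P m /\ R x0 m /\ forall y, P y -> R m y -> R y m.
Proof.
intros Rr Rt P0 Hch.
pose (T := {x : X | P x /\ R x0 x}).
pose (t0 := exist (fun x => P x /\ R x0 x) x0 (conj P0 (Rr x0)) : T).
pose (R' := fun a b : T => boolp.asbool (R (proj1_sig a) (proj1_sig b))).
destruct (@classical_sets.ZL_preorder T t0 R') as [m Hm].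
- intros t; apply boolp.asboolT; apply Rr.
- intros a b c H1 H2; apply boolp.asboolT; apply boolp.asboolW in H1; apply boolp.asboolW in H2; eauto.
- intros A HA.
  destruct (classic (exists a, A a)) as [[a Aa]|NE].
  + destruct (Hch (fun x => exists a, A a /\ proj1_sig a = x)) as [u [Pu Hu]].
    * intros c [a' [_ <-]]. apply (proj2_sig a').
    * intros x y [a1 [A1 <-]] [b1 [B1 <-]]. destruct (HA a1 b1 A1 B1) as [H|H];
      apply boolp.asboolW in H; auto.
    * exists (proj1_sig a); eauto.
    * assert (R x0 u) as Ru.
      { apply Rt with (proj1_sig a). apply (proj2_sig a). apply Hu; eauto. }
      exists (exist _ u (conj Pu Ru)). intros s As. apply boolp.asboolT. simpl. apply Hu; eauto.
  + exists t0. intros s As. exfalso; eauto.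
- exists (proj1_sig m). split; [apply (proj2_sig m)|split; [apply (proj2_sig m)|]].
  intros y Py Rmy.
  assert (R x0 y) as R0y by (apply Rt with (proj1_sig m); [apply (proj2_sig m)|auto]).
  specialize (Hm (exist _ y (conj Py R0y)) (boolp.asboolT Rmy)).
  apply boolp.asboolW in Hm. exact Hm.
Qed.

Definition pfilter (X : Type) (F : (X -> Prop) -> Prop) : Prop :=
  F (fun _ => True) /\ ~ F (fun _ => False) /\
  (forall A B : X -> Prop, F A -> (forall x, A x -> B x) -> F B) /\
  (forall A B : X -> Prop, F A -> F B -> F (fun x => A x /\ B x)).

Section UF.
Variable X : Type.
Implicit Types p q r : (X -> Prop) -> Prop.

Lemma uf_mono p : ultrafilter p -> forall A B : X -> Prop, p A -> (forall x, A x -> B x) -> p B.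
Proof. intros (_&_&H&_); exact H. Qed.
Lemma uf_inter p : ultrafilter p -> forall A B : X -> Prop, p A -> p B -> p (fun x => A x /\ B x).
Proof. intros (_&_&_&H&_); exact H. Qed.
Lemma uf_True p : ultrafilter p -> p (fun _ => True).
Proof. intros (H&_); exact H. Qed.
Lemma uf_False p : ultrafilter p -> ~ p (fun _ => False).
Proof. intros (_&H&_); exact H. Qed.
Lemma uf_compl p : ultrafilter p -> forall A : X -> Prop, p A \/ p (fun x => ~ A x).
Proof. intros (_&_&_&_&H); exact H. Qed.
Lemma uf_not p A : ultrafilter p -> p A -> p (fun x => ~ A x) -> False.
Proof.
intros U H1 H2. apply (uf_False U). eapply uf_mono; [exact U| apply (uf_inter U _ _ H1 H2)|].
simpl. intros x [a b]; auto.
Qed.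
Lemma uf_notp p A : ultrafilter p -> ~ p A -> p (fun x => ~ A x).
Proof. intros U H. destruct (uf_compl U A); tauto. Qed.
Lemma uf_agree p (C A B : X -> Prop) : ultrafilter p -> p C ->
  (forall x, C x -> (A x <-> B x)) -> p A -> p B.
Proof.
intros U HC H HA. eapply uf_mono; [exact U|apply (uf_inter U _ _ HC HA)|].
intros x [c a]. apply (H x c); auto.
Qed.
Lemma uf_max p r : ultrafilter p -> ultrafilter r -> (forall A, r A -> p A) -> p = r.
Proof.
intros Up Ur H. apply functional_extensionality; intros A.
apply propositional_extensionality; split; auto.
intros pA. destruct (uf_compl Ur A) as [|rA]; auto.
exfalso. exact (uf_not _ Up pA (H _ rA)).
Qed.

Lemma uf_exists (F : (X -> Prop) -> Prop) : pfilter F ->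
  exists p, ultrafilter p /\ forall A, F A -> p A.
Proof.
intros PF.
destruct (zorn_gen (@pfilter X) (fun f g => forall A, f A -> g A) F) as [m [Pm [Fm Mm]]]; auto.
- intros C HC Hch [c Cc]. exists (fun A => exists c, C c /\ c A). split.
  + split; [|split; [|split]].
    * exists c; split; auto. apply (HC c Cc).
    * intros [c' [Cc' Hc']]. apply (HC c' Cc'). exact Hc'.
    * intros A B [c' [Cc' Hc']] AB. exists c'; split; auto. apply (HC c' Cc') with A; auto.
    * intros A B [c1 [C1 H1]] [c2 [C2 H2]].
      destruct (Hch c1 c2 C1 C2) as [I|I].
      -- exists c2; split; auto. apply (HC c2 C2); auto.
      -- exists c1; split; auto. apply (HC c1 C1); auto.
  + intros c' Cc' A H. exists c'; auto.
- exists m. split; auto.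
  destruct Pm as (m1&m2&m3&m4). split; [|split; [|split; [|split]]]; auto.
  intros A. destruct (classic (m A)) as [|nA]; [left; auto|right].
  apply NNPP; intro nnA.
  pose (G := fun B : X -> Prop => exists g, m g /\ forall x, g x -> A x -> B x).
  assert (PG : pfilter G).
  { split; [|split; [|split]].
    - exists (fun _ => True); split; auto.
    - intros [g [mg Hg]]. apply nnA. apply (m3 g); [exact mg|]. intros x gx Ax. exact (Hg x gx Ax).
    - intros B1 B2 [g [mg Hg]] H. exists g; split; auto.
    - intros B1 B2 [g1 [mg1 H1]] [g2 [mg2 H2]]. exists (fun x => g1 x /\ g2 x); split; auto.
      intros x [a b] c; split; auto. }
  assert (mG : forall B, m B -> G B).
  { intros B mB. exists B; split; auto. }
  apply nA. apply (Mm G PG mG). exists (fun _ => True); split; auto.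
Qed.

Definition closed (C : ((X -> Prop) -> Prop) -> Prop) : Prop :=
  forall r, ultrafilter r -> (forall A, r A -> exists c, C c /\ c A) -> C r.

End UF.

Section PS.
Variable S : Type.
Variable op : S -> S -> option S.
Implicit Types p q r m : (S -> Prop) -> Prop.

Lemma sinv_mono s (A B : S -> Prop) t : (forall x, A x -> B x) -> sinv op s A t -> sinv op s B t.
Proof. intros H [u [e a]]. exists u; auto. Qed.

Lemma delta_uf p : deltaS op p -> ultrafilter p.
Proof. intros [U _]; exact U. Qed.

Lemma mul_uf p q : ultrafilter p -> deltaS op q -> ultrafilter (uf_mul op p q).
Proof.
intros Up [Uq Dq]. unfold uf_mul.
split; [|split; [|split; [|split]]].
- apply (uf_mono Up (fun _ => True)); [apply (uf_True Up)|]. intros s _.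
  apply (uf_mono Uq (phi op s)); auto. intros t H. unfold phi in H.
  destruct (op s t) as [u|] eqn:E; [exists u; auto|congruence].
- intros H. apply (uf_False Up). apply (uf_mono Up _ _ H). intros s Hs.
  apply (uf_False Uq). apply (uf_mono Uq _ _ Hs). intros t [u [_ f]]; exact f.
- intros A B HA AB. apply (uf_mono Up _ _ HA). intros s Hs. apply (uf_mono Uq _ _ Hs).
  intros t; apply sinv_mono; auto.
- intros A B HA HB. apply (uf_mono Up _ _ (uf_inter Up _ _ HA HB)). intros s [h1 h2].
  apply (uf_mono Uq _ _ (uf_inter Uq _ _ h1 h2)). intros t [[u [e1 a]] [u' [e2 b]]].
  rewrite e1 in e2. injection e2 as <-. exists u; auto.
- intros A. destruct (uf_compl Up (fun s => q (sinv op s A))) as [H|H]; [left; auto|right].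
  apply (uf_mono Up _ _ H). intros s Hs. apply uf_notp in Hs; auto.
  apply (uf_mono Uq _ _ (uf_inter Uq _ _ Hs (Dq s))). intros t [h1 h2].
  unfold phi in h2. destruct (op s t) as [u|] eqn:E; [|congruence].
  exists u; split; auto. intros Au. apply h1. exists u; auto.
Qed.

Lemma mul_delta p q : ps_assoc op -> deltaS op p -> deltaS op q -> deltaS op (uf_mul op p q).
Proof.
intros As [Up Dp] [Uq Dq]. split. { apply mul_uf; [exact Up|split; auto]. }
intros x. unfold uf_mul. apply (uf_mono Up _ _ (Dp x)). intros s Hs.
unfold phi in Hs. destruct (op x s) as [v|] eqn:E; [|congruence].
apply (uf_mono Uq _ _ (uf_inter Uq _ _ (Dq s) (Dq v))). intros t [h1 h2].
unfold phi in h1. destruct (op s t) as [u|] eqn:E2; [|congruence].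
exists u; split; auto. unfold phi. specialize (As x s t). rewrite E, E2 in As.
rewrite <- As. exact h2.
Qed.

Lemma sinv_assoc s t u (A : S -> Prop) : ps_assoc op -> op s t = Some u ->
  forall v, sinv op u A v <-> sinv op t (sinv op s A) v.
Proof.
intros As E v. specialize (As s t v). rewrite E in As. split.
- intros [z [e a]]. rewrite e in As. destruct (op t v) as [w|] eqn:E2; [|discriminate].
  exists w; split; auto. exists z; auto.
- intros [w [e [z [e2 a]]]]. rewrite e, e2 in As. exists z; auto.
Qed.

Lemma mul_assoc p q r : ps_assoc op -> ultrafilter p -> deltaS op q -> ultrafilter r ->
  uf_mul op (uf_mul op p q) r = uf_mul op p (uf_mul op q r).
Proof.
intros As Up [Uq Dq] Ur. apply functional_extensionality; intros A.
apply propositional_extensionality. unfold uf_mul.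
assert (K : forall s, q (sinv op s (fun u => r (sinv op u A))) <->
                      q (fun t => r (sinv op t (sinv op s A)))).
{ intros s. split; intros H; (eapply uf_agree; [exact Uq|exact (Dq s)| |exact H]);
  intros t Ht; unfold phi in Ht; destruct (op s t) as [u|] eqn:E; try congruence;
  pose proof (sinv_assoc A As E) as K.
  - split.
    + intros [u' [e h]]. rewrite E in e. injection e as <-.
      apply (uf_mono Ur _ _ h). intros v; apply K.
    + intros h. exists u; split; auto. apply (uf_mono Ur _ _ h). intros v; apply K.
  - split.
    + intros h. exists u; split; auto. apply (uf_mono Ur _ _ h). intros v; apply K.
    + intros [u' [e h]]. rewrite E in e. injection e as <-.
      apply (uf_mono Ur _ _ h). intros v; apply K. }
split; intros H; apply (uf_mono Up _ _ H); intros s; apply K.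
Qed.

Lemma delta_closed : closed (deltaS op).
Proof.
intros r Ur H. split; auto. intros x.
apply NNPP; intros N. apply uf_notp in N; auto.
destruct (H _ N) as [c [[Uc Dc] Hc]]. exact (uf_not _ Uc (Dc x) Hc).
Qed.

Lemma closed_mulr (C : ((S -> Prop) -> Prop) -> Prop) m :
  closed C -> (forall c, C c -> ultrafilter c) -> deltaS op m ->
  closed (fun y => exists x, C x /\ uf_mul op x m = y).
Proof.
intros Cc CU Dm r Ur H.
pose (hat := fun (A : S -> Prop) s => m (sinv op s A)).
pose (G := fun B : S -> Prop => exists A, r A /\ forall x, C x -> x (hat A) -> x B).
assert (PG : pfilter G).
{ split; [|split; [|split]].
  - exists (fun _ => True); split; [apply (uf_True Ur)|]. intros x Cx _. apply (uf_True (CU x Cx)).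
  - intros [A [rA HA]]. destruct (H A rA) as [y [[x [Cx <-]] h]].
    apply (uf_False (CU x Cx)). apply HA; auto.
  - intros B1 B2 [A [rA HA]] HB. exists A; split; auto. intros x Cx hx.
    apply (uf_mono (CU x Cx) _ _ (HA x Cx hx)); auto.
  - intros B1 B2 [A1 [r1 H1]] [A2 [r2 H2]]. exists (fun x => A1 x /\ A2 x); split.
    + apply (uf_inter Ur); auto.
    + intros x Cx hx. apply (uf_inter (CU x Cx)).
      * apply H1; auto. apply (uf_mono (CU x Cx) _ _ hx). intros s hs.
        apply (uf_mono (proj1 Dm) _ _ hs). intros t; apply sinv_mono; tauto.
      * apply H2; auto. apply (uf_mono (CU x Cx) _ _ hx). intros s hs.
        apply (uf_mono (proj1 Dm) _ _ hs). intros t; apply sinv_mono; tauto. }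
destruct (uf_exists PG) as [p [Up Gp]].
exists p. split.
- apply Cc; auto. intros B pB. apply NNPP; intros N.
  assert (G (fun s => ~ B s)).
  { exists (fun _ => True); split; [apply (uf_True Ur)|]. intros x Cx _.
    apply uf_notp; auto. intros xB; apply N; eauto. }
  exact (uf_not _ Up pB (Gp _ H0)).
- apply uf_max; auto. apply mul_uf; auto.
  intros A rA. apply Gp. exists A; split; auto.
Qed.

End PS.

Section PS2.
Variable S : Type.
Variable op : S -> S -> option S.

Definition goodset (Q : (((S->Prop)->Prop)->Prop) -> Prop) (C : ((S->Prop)->Prop)->Prop) : Prop :=
  closed C /\ (exists x, C x) /\ (forall x, C x -> deltaS op x) /\ Q C.

Lemma min_closed (Q : (((S->Prop)->Prop)->Prop) -> Prop) X0 :
  (forall F, (exists C, F C) -> (forall C, F C -> Q C) -> Q (fun x => forall C, F C -> C x)) ->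
  goodset Q X0 ->
  exists M, goodset Q M /\ (forall x, M x -> X0 x) /\
   forall Y, goodset Q Y -> (forall x, Y x -> M x) -> forall x, M x -> Y x.
Proof.
intros HQ G0.
destruct (zorn_gen (goodset Q) (fun C D => forall x, D x -> C x) X0) as [M [GM [M0 Mm]]]; auto.
- intros C HC Hch [c Cc]. exists (fun x => forall D, C D -> D x). split.
  + split; [|split; [|split]].
    * intros r Ur H D CD. destruct (HC D CD) as [Dc _]. apply Dc; [exact Ur|].
      intros A rA. destruct (H A rA) as [y [Iy yA]]. exists y; split; [apply Iy; exact CD|exact yA].
    * pose (F := fun B : S -> Prop => exists D, C D /\ forall c, D c -> c B).
      assert (PF : pfilter F).
      { split; [|split; [|split]].
        - exists c; split; auto. intros x Dx. destruct (HC c Cc) as (_&_&Dd0&_).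
          apply (uf_True (delta_uf (Dd0 x Dx))).
        - intros [D [CD HD]]. destruct (HC D CD) as (_&[x Dx]&Dd0&_).
          apply (uf_False (delta_uf (Dd0 x Dx))). apply HD; exact Dx.
        - intros A B [D [CD HD]] AB. exists D; split; auto. intros x Dx.
          destruct (HC D CD) as (_&_&Dd0&_). apply (uf_mono (delta_uf (Dd0 x Dx)) _ _ (HD x Dx)); auto.
        - intros A B [D1 [C1 H1]] [D2 [C2 H2]].
          destruct (Hch D1 D2 C1 C2) as [I|I].
          + exists D2; split; auto. intros x Dx. destruct (HC D2 C2) as (_&_&Dd0&_).
            apply (uf_inter (delta_uf (Dd0 x Dx))); [apply H1, I, Dx|apply H2, Dx].
          + exists D1; split; auto. intros x Dx. destruct (HC D1 C1) as (_&_&Dd0&_).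
            apply (uf_inter (delta_uf (Dd0 x Dx))); [apply H1, Dx|apply H2, I, Dx]. }
      destruct (uf_exists PF) as [r [Ur Fr]]. exists r. intros D CD.
      destruct (HC D CD) as (Dcl&_&Dd0&_). apply Dcl; auto.
      intros A rA. apply NNPP; intros N.
      assert (F (fun s => ~ A s)).
      { exists D; split; auto. intros x Dx. apply uf_notp; [apply (delta_uf (Dd0 x Dx))|].
        intros xA; apply N; exists x; split; [exact Dx|exact xA]. }
      exact (uf_not _ Ur rA (Fr _ H)).
    * intros x Ix. destruct (HC c Cc) as (_&_&Dd0&_). apply Dd0, Ix, Cc.
    * apply HQ. exists c; auto. intros D CD; apply HC; auto.
  + intros D CD x Ix. apply Ix; auto.
- exists M. split; auto.
Qed.

Lemma K_exists : ps_assoc op -> (exists p, deltaS op p) -> exists p, Kdelta op p.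
Proof.
intros As [p0 D0].
pose (Q := fun L : ((S->Prop)->Prop)->Prop => forall p q, deltaS op p -> L q -> L (uf_mul op p q)).
destruct (@min_closed Q (deltaS op)) as [M [[Mc [[l Ml] [Md MQ]]] [_ Mm]]].
- intros F [C FC] HF p q Dp Iq C' FC'. apply (HF C' FC'); [exact Dp|apply Iq, FC'].
- split; [exact (@delta_closed S op)|split; [exists p0; auto|split; auto]].
  intros p q Dp Dq. apply mul_delta; auto.
- exists l. split; auto. intros I [[r Ir] [Id II]].
  pose (m := uf_mul op r l).
  assert (Im : I m) by (apply (II l r (Md l Ml) Ir)).
  assert (Mmm : M m) by (apply MQ; auto).
  assert (Dm : deltaS op m) by auto.
  pose (Y := fun y => exists x, deltaS op x /\ uf_mul op x m = y).
  assert (GY : goodset Q Y).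
  { split; [|split; [|split]].
    - apply closed_mulr; [exact (@delta_closed S op)|intros c Dc; exact (delta_uf Dc)|exact Dm].
    - exists (uf_mul op p0 m). exists p0; auto.
    - intros y [x [Dx <-]]. apply mul_delta; auto.
    - intros p y Dp [x [Dx <-]]. exists (uf_mul op p x). split; [apply mul_delta; auto|].
      apply mul_assoc; [exact As|exact (delta_uf Dp)|exact Dx|exact (delta_uf Dm)]. }
  assert (YM : forall y, Y y -> M y).
  { intros y [x [Dx <-]]. apply MQ; auto. }
  destruct (Mm Y GY YM l Ml) as [x [Dx E]]. rewrite <- E. apply (II x m Dx Im).
Qed.

End PS2.

Lemma hext_mul (S T : Type) (opS : S -> S -> option S) (opT : T -> T -> option T) (h : S -> T) p q :
  ps_hom opS opT h -> ultrafilter p -> deltaS opS q ->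
  hext h (uf_mul opS p q) = uf_mul opT (hext h p) (hext h q).
Proof.
intros Hh Up [Uq Dq]. apply functional_extensionality; intros B.
apply propositional_extensionality. unfold hext, uf_mul.
assert (K : forall s, q (sinv opS s (fun x => B (h x))) <-> q (fun s' => sinv opT (h s) B (h s'))).
{ intros s. split; intros H; (eapply uf_agree; [exact Uq|exact (Dq s)| |exact H]);
  intros t Ht; unfold phi in Ht; destruct (opS s t) as [u|] eqn:E; try congruence;
  pose proof (Hh _ _ _ E) as E2; split.
  - intros [u' [e b]]. rewrite E in e. injection e as <-. exists (h u); auto.
  - intros [w [e b]]. rewrite E2 in e. injection e as <-. exists u; auto.
  - intros [w [e b]]. rewrite E2 in e. injection e as <-. exists u; auto.
  - intros [u' [e b]]. rewrite E in e. injection e as <-. exists (h u); auto. }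
split; intros H; apply (uf_mono Up _ _ H); intros s; apply K.
Qed.

Theorem theorem5p6 (S T : Type) (opS : S -> S -> option S) (opT : T -> T -> option T)
  (h : S -> T)
  (assocS : ps_assoc opS) (commS : ps_comm opS) (adeqS : adequate opS)
  (assocT : ps_assoc opT) (commT : ps_comm opT) (adeqT : adequate opT)
  (homh : ps_hom opS opT h) (surjh : forall t, exists s, h s = t)
  (onto_into : forall p, deltaS opS p -> deltaS opT (hext h p))
  (onto_onto : forall q, deltaS opT q -> exists p, deltaS opS p /\ hext h p = q) :
  ((forall p, Kdelta opS p -> Kdelta opT (hext h p)) /\
   (forall q, Kdelta opT q -> exists p, Kdelta opS p /\ hext h p = q)) /\
  (forall A : S -> Prop, central opS A -> central opT (img h A)) /\
  (forall A : T -> Prop, central opT A -> central opS (preim h A)).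
Proof.
assert (a1 : forall p, Kdelta opS p -> Kdelta opT (hext h p)).
{ intros p [Dp Kp]. split; [apply onto_into; exact Dp|].
  intros J [[q0 Jq0] [JD JI]].
  pose (I := fun p' => deltaS opS p' /\ J (hext h p')).
  assert (HI : is_ideal opS I).
  { split; [|split].
    - destruct (onto_onto q0 (JD q0 Jq0)) as [p0 [D0 E0]]. exists p0. split; [exact D0|].
      rewrite E0; exact Jq0.
    - intros p' [D' _]; exact D'.
    - intros p1 q1 D1 [Dq1 Jq1]. split; split.
      + apply mul_delta; assumption.
      + rewrite (hext_mul homh (delta_uf D1) Dq1). exact (proj1 (JI _ _ (onto_into _ D1) Jq1)).
      + apply mul_delta; assumption.
      + rewrite (hext_mul homh (delta_uf Dq1) D1). exact (proj2 (JI _ _ (onto_into _ D1) Jq1)). }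
  exact (proj2 (Kp I HI)). }
assert (a2 : forall q, Kdelta opT q -> exists p, Kdelta opS p /\ hext h p = q).
{ intros q [Dq Kq].
  destruct (onto_onto q Dq) as [pq [Dpq _]].
  destruct (K_exists assocS (ex_intro _ pq Dpq)) as [p0 Kp0].
  pose (J := fun q' => exists p, Kdelta opS p /\ hext h p = q').
  apply (Kq J). split; [|split].
  - exists (hext h p0); exists p0; split; [exact Kp0|reflexivity].
  - intros q' [p [Kp <-]]. exact (proj1 (a1 p Kp)).
  - intros q1 q' D1 [p [[Dp Kp] <-]].
    destruct (onto_onto q1 D1) as [p1 [Dp1 <-]]. split.
    + exists (uf_mul opS p1 p). split.
      * split; [apply mul_delta; assumption|].
        intros I [HI1 [HI2 HI3]]. apply (HI3 p1 p Dp1 (Kp I (conj HI1 (conj HI2 HI3)))).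
      * apply hext_mul; [exact homh|exact (delta_uf Dp1)|exact Dp].
    + exists (uf_mul opS p p1). split.
      * split; [apply mul_delta; assumption|].
        intros I [HI1 [HI2 HI3]]. apply (HI3 p1 p Dp1 (Kp I (conj HI1 (conj HI2 HI3)))).
      * apply hext_mul; [exact homh|exact (delta_uf Dp)|exact Dp1]. }
split; [split; assumption|split].
- intros A [p [Kp [Ip pA]]]. exists (hext h p). split; [apply a1; exact Kp|split].
  + rewrite <- (hext_mul homh (delta_uf (proj1 Kp)) (proj1 Kp)). rewrite Ip. reflexivity.
  + unfold hext. apply (uf_mono (delta_uf (proj1 Kp)) _ _ pA). intros s As.
    exists s; split; [exact As|reflexivity].
- intros A [q [Kq [Iq qA]]].
  destruct (a2 q Kq) as [p [Kp Ep]].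
  pose proof (proj1 Kp) as Dp.
  pose (L := fun y => exists x, deltaS opS x /\ uf_mul opS x p = y).
  assert (LD : forall y, L y -> deltaS opS y).
  { intros y [x [Dx <-]]. apply mul_delta; assumption. }
  assert (LK : forall y, L y -> Kdelta opS y).
  { intros y Ly. split; [apply LD; exact Ly|]. destruct Ly as [x [Dx <-]].
    intros I [HI1 [HI2 HI3]]. apply (HI3 x p Dx (proj2 Kp I (conj HI1 (conj HI2 HI3)))). }
  pose (Q := fun Y : ((S->Prop)->Prop)->Prop => forall a b, Y a -> Y b -> Y (uf_mul opS a b)).
  pose (X0 := fun y => L y /\ hext h y = q).
  assert (HQ : forall F, (exists C, F C) -> (forall C, F C -> Q C) -> Q (fun x => forall C, F C -> C x)).
  { intros F _ HF a b Ia Ib C FC. apply (HF C FC); [apply Ia, FC|apply Ib, FC]. }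
  assert (G0 : goodset opS Q X0).
  { split; [|split; [|split]].
    - intros r Ur H.
      assert (Lr : L r).
      { apply (closed_mulr (@delta_closed S opS) (fun c Dc => delta_uf Dc) Dp); [exact Ur|].
        intros B rB. destruct (H B rB) as [c [[Lc _] cB]]. exists c; split; [exact Lc|exact cB]. }
      split; [exact Lr|].
      apply uf_max; [exact (delta_uf (onto_into _ (LD r Lr)))|exact (delta_uf (proj1 Kq))|].
      intros B qB. unfold hext. apply NNPP; intros N. apply (uf_notp _ Ur) in N.
      destruct (H _ N) as [c [[Lc Ec] cN]].
      rewrite <- Ec in qB. unfold hext in qB.
      exact (uf_not _ (delta_uf (LD c Lc)) qB cN).
    - exists (uf_mul opS p p). split.
      + exists p; split; [exact Dp|reflexivity].
      + rewrite (hext_mul homh (delta_uf Dp) Dp). rewrite Ep. exact Iq.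
    - intros x [Lx _]. apply LD; exact Lx.
    - intros a b [La Ea] [Lb Eb]. split.
      + destruct Lb as [x2 [Dx2 Eb2]]. exists (uf_mul opS a x2). split.
        * apply mul_delta; [exact assocS|apply LD; exact La|exact Dx2].
        * rewrite <- Eb2. apply mul_assoc; [exact assocS|exact (delta_uf (LD a La))|exact Dx2|exact (delta_uf Dp)].
      + rewrite (hext_mul homh (delta_uf (LD a La)) (LD b Lb)). rewrite Ea, Eb. exact Iq. }
  destruct (min_closed HQ G0) as [M [[Mc [[x Mx] [Md MQ]]] [MX0 Mm]]].
  pose (Y1 := fun y => exists z, M z /\ uf_mul opS z x = y).
  assert (GY1 : goodset opS Q Y1).
  { split; [|split; [|split]].
    - apply closed_mulr; [exact Mc|intros c Mc'; exact (delta_uf (Md c Mc'))|exact (Md x Mx)].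
    - exists (uf_mul opS x x). exists x; split; [exact Mx|reflexivity].
    - intros y [z [Mz <-]]. apply mul_delta; [exact assocS|apply Md, Mz|apply Md, Mx].
    - intros a b [z1 [Mz1 <-]] [z2 [Mz2 <-]].
      exists (uf_mul opS (uf_mul opS z1 x) z2). split.
      + apply MQ; [apply MQ; [exact Mz1|exact Mx]|exact Mz2].
      + apply mul_assoc; [exact assocS|exact (delta_uf (mul_delta assocS (Md z1 Mz1) (Md x Mx)))|apply Md, Mz2|exact (delta_uf (Md x Mx))]. }
  assert (Y1M : forall y, Y1 y -> M y).
  { intros y [z [Mz <-]]. apply MQ; [exact Mz|exact Mx]. }
  destruct (Mm Y1 GY1 Y1M x Mx) as [z0 [Mz0 Ez0]].
  pose (Y2 := fun z => M z /\ uf_mul opS z x = x).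
  assert (GY2 : goodset opS Q Y2).
  { split; [|split; [|split]].
    - intros r Ur H. split.
      + apply Mc; [exact Ur|]. intros B rB. destruct (H B rB) as [c [[Mc' _] cB]].
        exists c; split; [exact Mc'|exact cB].
      + apply uf_max; [apply mul_uf; [exact Ur|apply Md, Mx]|exact (delta_uf (Md x Mx))|].
        intros B xB. unfold uf_mul. apply NNPP; intros N. apply (uf_notp _ Ur) in N.
        destruct (H _ N) as [c [[Mc' Ec] cN]].
        rewrite <- Ec in xB. unfold uf_mul in xB.
        exact (uf_not _ (delta_uf (Md c Mc')) xB cN).
    - exists z0; split; [exact Mz0|exact Ez0].
    - intros z [Mz _]. apply Md, Mz.
    - intros a b [Ma Ea] [Mb Eb]. split; [apply MQ; assumption|].
      rewrite mul_assoc; [|exact assocS|exact (delta_uf (Md a Ma))|apply Md, Mb|exact (delta_uf (Md x Mx))].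
      rewrite Eb. exact Ea. }
  assert (Y2M : forall y, Y2 y -> M y) by (intros y [My _]; exact My).
  destruct (Mm Y2 GY2 Y2M x Mx) as [_ Ixx].
  destruct (MX0 x Mx) as [Lx Ex].
  exists x. split; [apply LK; exact Lx|split; [exact Ixx|]].
  change (hext h x A). rewrite Ex. exact qA.
Qed.
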